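(* Fix a total order on the subsets of $\mathbb N_n$, for instance the lexicographic order, and write $I<J$ accordingly. The family $$\mathfrak B^{\mathbb R}=\{2^{-n/2}b_K: K\subseteq\mathbb N_n\}\ \cup\ \Big\{\tfrac{b_K(\mathbf c_{I,J}+\mathbf c_{J,I})}{2^{(n+1-|I\cup J|)/2}},\ \tfrac{-i\,b_K(\mathbf c_{I,J}-\mathbf c_{J,I})}{2^{(n+1-|I\cup J|)/2}}:\ K,I,J\subseteq\mathbb N_n \text{ mutually disjoint},\ I<J\Big\}$$ consists of self-adjoint operators and is an orthonormal $\mathbb C$-basis of $\mathcal L^2(\mathcal F)$. Moreover, for every $k\in\mathbb N_0$, the set $\mathfrak B^{\mathbb R}\cap\mathcal O_k^{\mathrm{sa}}$ is an orthonormal $\mathbb R$-basis of $\mathcal O_k^{\mathrm{sa}}$. Explicitly, it consists of two kinds of elements: - the elements $2^{-n/2}b_K$ with $|K|\le k$; - the elements of the second set above with $|I|+|J|+2|K|=2l$ for some $0\le l\le k$.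
   Context: Let $\mathfrak h$ be a complex Hilbert space of dimension $n<\infty$ with orthonormal basis $\varphi_1,\dots,\varphi_n$, and $\mathbb N_n=\{1,\dots,n\}$. $\mathcal F=\bigoplus_k\bigwedge^k\mathfrak h$ is the fermion Fock space. For $\omega\in\mathcal F$, $\mathbf c^*(\omega)\xi=\omega\wedge\xi$ and $\mathbf c(\omega)=\mathbf c^*(\omega)^*$. For $A=\{a_1<\dots<a_k\}$, $\varphi_A=\varphi_{a_1}\wedge\cdots\wedge\varphi_{a_k}$ (with $\varphi_\emptyset$ the vacuum). Put $\mathbf c^*_A=\mathbf c^*(\varphi_A)$, $\mathbf c_A=\mathbf c(\varphi_A)$, $\mathbf c_{A,B}=\mathbf c^*_A\mathbf c_B$, and $\mathbf n_A=\mathbf c_{A,A}$. For $K\subseteq\mathbb N_n$ let $b_K=\sum_{I\subseteq K}(-2)^{|I|}\mathbf n_I$. $\mathcal L^2(\mathcal F)$ is the space of operators on $\mathcal F$ with $\langle a,b\rangle=\operatorname{tr}(a^*b)$. $\mathcal O_k$, the space of $k$-body operators, is the complex span of all $\mathbf c^*(\omega)\mathbf c(\eta)$ with $\omega\in\bigwedge^r\mathfrak h$, $\eta\in\bigwedge^s\mathfrak h$, and $r+s=2l$ for some $0\le l\le k$. $\mathcal O_k^{\mathrm{sa}}$ is the real subspace of self-adjoint elements of $\mathcal O_k$. *)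

(* Defs.v *)
From HB Require Import structures.
From mathcomp Require Import all_boot all_order all_algebra.
From mathcomp Require Import algC.
Set Implicit Arguments. Unset Strict Implicit. Unset Printing Implicit Defensive.
Import Order.TTheory GRing.Theory Num.Theory.
Local Open Scope ring_scope.

(* Fock space F = (+)_k /\^k h, dim h = n, with orthonormal basis phi_A,
   A ranging over subsets of N_n (here 'I_n). *)
Definition dimF (n : nat) : nat := #|{: {set 'I_n}}|.
Definition setOf (n : nat) (i : 'I_(dimF n)) : {set 'I_n} := enum_val i.
Definition rankOf (n : nat) (A : {set 'I_n}) : 'I_(dimF n) := enum_rank A.

Definition fock (n : nat) := 'cV[algC]_(dimF n).
Definition op (n : nat) := 'M[algC]_(dimF n).

Definition phi (n : nat) (A : {set 'I_n}) : fock n :=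
  \col_i (if setOf i == A then 1 else 0).

(* phi_A /\ phi_B = wsign A B * phi_(A u B) when A, B disjoint (else 0):
   sorting requires one transposition per pair (a,b) in A x B with b < a. *)
Definition wsign (n : nat) (A B : {set 'I_n}) : algC :=
  (-1) ^+ #|[set p : 'I_n * 'I_n | [&& p.1 \in A, p.2 \in B & (p.2 < p.1)%N]]|.

(* c^*(omega) xi = omega /\ xi, as a matrix in the basis (phi_A) *)
Definition cstar (n : nat) (om : fock n) : op n :=
  \matrix_(x, y) \sum_(A : {set 'I_n})
     om (rankOf A) 0 *
       (if [disjoint A & setOf y] && (setOf x == A :|: setOf y)
        then wsign A (setOf y) else 0).

Definition adj (n : nat) (a : op n) : op n := (map_mx Num.conj a)^T.

Definition cann (n : nat) (om : fock n) : op n := adj (cstar om).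

Definition cstarS (n : nat) (A : {set 'I_n}) : op n := cstar (phi A).
Definition cannS (n : nat) (A : {set 'I_n}) : op n := cann (phi A).
Definition cAB (n : nat) (A B : {set 'I_n}) : op n := cstarS A *m cannS B.
Definition nS (n : nat) (A : {set 'I_n}) : op n := cAB A A.

Definition bK (n : nat) (K : {set 'I_n}) : op n :=
  \sum_(P : {set 'I_n} | P \subset K) ((-2) ^+ #|P|) *: nS P.

Definition hs (n : nat) (a b : op n) : algC := \tr (adj a *m b).

(* omega in /\^r h *)
Definition homog (n : nat) (r : nat) (om : fock n) : Prop :=
  forall A : {set 'I_n}, #|A| != r -> om (rankOf A) 0 = 0.

Definition Ok (n k : nat) (X : op n) : Prop :=
  exists (m : nat) (coef : 'I_m -> algC) (r s : 'I_m -> nat) (om et : 'I_m -> fock n),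
    (forall i, [/\ homog (r i) (om i), homog (s i) (et i) &
                   exists l, (l <= k)%N /\ (r i + s i)%N = (2 * l)%N]) /\
    X = \sum_(i < m) coef i *: (cstar (om i) *m cann (et i)).

Definition Oksa (n k : nat) (X : op n) : Prop := Ok k X /\ adj X = X.

(* Index set of the family B^R: inl K  ~  2^{-n/2} b_K ;
   inr (K, I, J, true)  ~  b_K (c_IJ + c_JI) / 2^{(n+1-|IuJ|)/2},
   inr (K, I, J, false) ~  -i b_K (c_IJ - c_JI) / 2^{(n+1-|IuJ|)/2}. *)
Definition bidx (n : nat) : finType :=
  ({set 'I_n} + {set 'I_n} * {set 'I_n} * {set 'I_n} * bool)%type.

Definition bvalid (n : nat) (lt : rel {set 'I_n}) (x : bidx n) : bool :=
  match x with
  | inl K => true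
  | inr (K, P, Q, _) =>
      [&& [disjoint K & P], [disjoint K & Q], [disjoint P & Q] & lt P Q]
  end.

Definition bfam (n : nat) (x : bidx n) : op n :=
  match x with
  | inl K => (sqrtC 2 ^- n) *: bK K
  | inr (K, P, Q, b) =>
      (sqrtC 2 ^- (n + 1 - #|P :|: Q|)%N) *:
        (if b then bK K *m (cAB P Q + cAB Q P)
         else (- 'i) *: (bK K *m (cAB P Q - cAB Q P)))
  end.

Definition bcond (n : nat) (k : nat) (x : bidx n) : bool :=
  match x with
  | inl K => (#|K| <= k)%N
  | inr (K, P, Q, _) => [exists l : 'I_k.+1, (#|P| + #|Q| + 2 * #|K|)%N == (2 * l)%N]
  end.

(* Main.v *)
Require Import Defs.
From HB Require Import structures.
From mathcomp Require Import all_boot all_order all_algebra.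
From mathcomp Require Import algC.
From mathcomp Require Import ring zify.
Import Order.TTheory GRing.Theory Num.Theory.
Local Open Scope ring_scope.
Set Implicit Arguments. Unset Strict Implicit. Unset Printing Implicit Defensive.

Definition ent {n} (M : op n) (X Y : {set 'I_n}) : algC := M (rankOf X) (rankOf Y).

Lemma setOfK n : cancel (@setOf n) (@rankOf n).
Proof. exact: enum_valK. Qed.
Lemma rankOfK n : cancel (@rankOf n) (@setOf n).
Proof. exact: enum_rankK. Qed.

Lemma sum_reidx n (F : 'I_(dimF n) -> algC) :
  \sum_i F i = \sum_(X : {set 'I_n}) F (rankOf X).
Proof.
by rewrite (reindex (@rankOf n)) //; exists (@setOf n) => x _;
  [apply: rankOfK | apply: setOfK].
Qed.

Lemma ent_ext n (M N : op n) : (forall X Y, ent M X Y = ent N X Y) -> M = N.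
Proof.
move=> H; apply/matrixP => i j; have := H (setOf i) (setOf j).
by rewrite /ent !setOfK.
Qed.

Lemma ent_mul n (M N : op n) X Y : ent (M *m N) X Y = \sum_Z ent M X Z * ent N Z Y.
Proof. by rewrite /ent mxE sum_reidx. Qed.
Lemma ent_add n (M N : op n) X Y : ent (M + N) X Y = ent M X Y + ent N X Y.
Proof. by rewrite /ent mxE. Qed.
Lemma ent_sub n (M N : op n) X Y : ent (M - N) X Y = ent M X Y - ent N X Y.
Proof. by rewrite /ent !mxE. Qed.
Lemma ent_opp n (M : op n) X Y : ent (- M) X Y = - ent M X Y.
Proof. by rewrite /ent !mxE. Qed.
Lemma ent_scale n c (M : op n) X Y : ent (c *: M) X Y = c * ent M X Y.
Proof. by rewrite /ent mxE. Qed.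
Lemma ent_sum n (I : finType) (P : pred I) (F : I -> op n) X Y :
  ent (\sum_(i | P i) F i) X Y = \sum_(i | P i) ent (F i) X Y.
Proof. by rewrite /ent summxE. Qed.
Lemma ent_sumT n (I : finType) (F : I -> op n) X Y :
  ent (\sum_i F i) X Y = \sum_i ent (F i) X Y.
Proof. by rewrite /ent summxE. Qed.
Lemma ent_adj n (M : op n) X Y : ent (adj M) X Y = (ent M Y X)^*.
Proof. by rewrite /ent /adj !mxE. Qed.

Lemma hs_ent n (M N : op n) :
  hs M N = \sum_X \sum_Y (ent M X Y)^* * ent N X Y.
Proof.
rewrite /hs /mxtrace sum_reidx exchange_big /=.
apply: eq_bigr => X _; rewrite mxE sum_reidx; apply: eq_bigr => Y _.
by rewrite /adj !mxE.
Qed.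

Lemma conj_wsign n (A B : {set 'I_n}) : (wsign A B)^* = wsign A B.
Proof. by rewrite /wsign rmorphXn rmorphN1. Qed.

Lemma wsign_sq n (A B : {set 'I_n}) : wsign A B * wsign A B = 1.
Proof. by rewrite /wsign -exprD addnn -mul2n exprM expr2 mulrNN mulr1 expr1n. Qed.

Lemma phiE n (A B : {set 'I_n}) : phi A (rankOf B) 0 = (B == A)%:R.
Proof. by rewrite /phi mxE rankOfK; case: eqP. Qed.

Lemma ent_cstarS n (A X Y : {set 'I_n}) :
  ent (cstarS A) X Y = if [disjoint A & Y] && (X == A :|: Y) then wsign A Y else 0.
Proof.
rewrite /ent /cstarS /cstar mxE (bigD1 A) //= big1 ?addr0.
  by rewrite phiE eqxx mul1r !rankOfK.
by move=> B nBA; rewrite phiE (negbTE nBA) mul0r.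
Qed.

Lemma ent_cannS n (B X Y : {set 'I_n}) :
  ent (cannS B) X Y = if [disjoint B & X] && (Y == B :|: X) then wsign B X else 0.
Proof.
rewrite /cannS /cann ent_adj -/(cstarS B) ent_cstarS.
by case: ifP; rewrite ?conj_wsign ?rmorph0.
Qed.

Lemma disjI (T : finType) (A B : {set T}) : [disjoint A & B] -> forall i, ~~ ((i \in A) && (i \in B)).
Proof. by move=> d i; apply/negP => /andP [iA iB]; rewrite (disjointFr d iA) in iB. Qed.

Lemma eqsetE (T : finType) (A B : {set T}) : (A == B) = [forall i, (i \in A) == (i \in B)].
Proof. by apply/eqP/forallP => [-> i // | H]; apply/setP => i; apply/eqP/H. Qed.

Lemma disjE (T : finType) (A B : {set T}) : [disjoint A & B] = [forall i, ~~ ((i \in A) && (i \in B))].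
Proof.
apply/idP/forallP => [d i|H]; first exact: disjI.
by rewrite -setI_eq0; apply/eqP/setP => i; rewrite !inE; apply/negbTE/H.
Qed.

Lemma subE (T : finType) (A B : {set T}) : (A \subset B) = [forall i, (i \in A) ==> (i \in B)].
Proof.
apply/subsetP/forallP => [H i|H i iA]; first by apply/implyP/H.
exact: (implyP (H i) iA).
Qed.

Lemma andfa (T : finType) (p q : pred T) : [forall i, p i] && [forall i, q i] = [forall i, p i && q i].
Proof.
apply/andP/forallP => [[/forallP a /forallP b] i | H]; first by rewrite a b.
by split; apply/forallP => i; case/andP: (H i).
Qed.

Ltac brute := (repeat (match goal with |- context [?x \in ?A] => case: (x \in A) | |- context [?x == ?y] => is_var x; case: (x == y) | |- context [(?a < ?b)%N] => case: (a < b)%N end)); done.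
Ltac gen_dsj i := repeat match goal with H : is_true (disjoint _ _) |- _ => move: (disjI H i); clear H end.
Ltac setsolve := let i := fresh "i" in apply/setP => i; gen_dsj i; rewrite !inE; brute.
Ltac fasolve := rewrite ?eqsetE ?disjE ?subE !andfa; apply: eq_forallb => ?; rewrite !inE; brute.

Ltac fatrue := rewrite ?eqsetE ?disjE ?subE; apply/forallP => ?; rewrite !inE; brute.

Definition frm n (P Q : {set 'I_n}) (c : {set 'I_n} -> algC) (X Y : {set 'I_n}) : algC :=
  \sum_(Z : {set 'I_n}) (if [&& [disjoint P & Z], [disjoint Q & Z], X == P :|: Z & Y == Q :|: Z] then c Z else 0).

Lemma frmE n P Q c (X Y : {set 'I_n}) : frm P Q c X Y =
  if [&& [disjoint P & X :\: P], [disjoint Q & X :\: P], X == P :|: (X :\: P)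
       & Y == Q :|: (X :\: P)] then c (X :\: P) else 0.
Proof.
rewrite /frm (bigD1 (X :\: P)) //= big1 ?addr0 // => Z neZ.
case: ifP => // /and4P [dPZ _ /eqP eX _]; case/negP: neZ; subst X; apply/eqP.
setsolve.
Qed.

Lemma ent_cAB n (P Q X Y : {set 'I_n}) :
  ent (cAB P Q) X Y = frm P Q (fun Z => wsign P Z * wsign Q Z) X Y.
Proof.
rewrite /cAB ent_mul /frm; apply: eq_bigr => Z _; rewrite ent_cstarS ent_cannS.
by case: [disjoint P & Z]; case: (X == _); case: [disjoint Q & Z]; case: (Y == _);
  rewrite /= ?mulr0 ?mul0r.
Qed.

Lemma ent_nS n (T X Y : {set 'I_n}) : ent (nS T) X Y = ((X == Y) && (T \subset X))%:R.
Proof.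
rewrite /nS ent_cAB frmE wsign_sq.
have -> : [&& [disjoint T & X :\: T], [disjoint T & X :\: T], X == T :|: X :\: T
       & Y == T :|: X :\: T] = (X == Y) && (T \subset X).
  fasolve.
by case: (_ && _).
Qed.

Lemma sum_subU1 n (a : 'I_n) (K : {set 'I_n}) (F : {set 'I_n} -> algC) : a \notin K ->
  \sum_(T : {set 'I_n} | T \subset a |: K) F T = \sum_(T : {set 'I_n} | T \subset K) (F T + F (a |: T)).
Proof.
move=> aK; rewrite big_split /= (bigID (fun T : {set 'I_n} => a \in T)) /= addrC; congr (_ + _).
  apply: eq_bigl => T; apply/andP/idP => [[sT aT]|sT].
    apply/subsetP => i iT; have := subsetP sT i iT; rewrite !inE; case/orP => // /eqP eia.
    by rewrite -eia iT in aT.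
  split; first exact: subset_trans sT (subsetU1 a K).
  by apply/negP => /(subsetP sT); rewrite (negbTE aK).
rewrite (reindex_onto (fun T => a |: T) (fun T => T :\ a)) /=.
  apply: eq_bigl => T; rewrite setU11 andbT.
  have aK' : forall i, (i == a) ==> (i \notin K) by move=> i; apply/implyP => /eqP->.
  rewrite !subE eqsetE !andfa; apply: eq_forallb => i; move: (aK' i); rewrite !inE; brute.
by move=> T /andP [_ aT]; rewrite setD1K.
Qed.

Lemma set_ind_card n (Pr : {set 'I_n} -> Prop) :
  Pr set0 -> (forall (a : 'I_n) (S : {set 'I_n}), a \notin S -> Pr S -> Pr (a |: S)) -> forall S, Pr S.
Proof.
move=> P0 PU S; have [m] := ubnP #|S|; elim: m S => // m IH S.
case: (set_0Vmem S) => [-> _ // | [a aS]]; rewrite ltnS => Sm.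
rewrite -(setD1K aS); apply: PU; first by rewrite setD11.
apply: IH; move: Sm; rewrite (cardsD1 a S) aS; done.
Qed.

Lemma sum_sub0 n (F : {set 'I_n} -> algC) : \sum_(T : {set 'I_n} | T \subset set0) F T = F set0.
Proof.
by rewrite (eq_bigl (pred1 set0)) ?big_pred1_eq // => T; rewrite /= subset0.
Qed.

Lemma powsum n (S : {set 'I_n}) (x : algC) :
  \sum_(T : {set 'I_n} | T \subset S) x ^+ #|T| = (1 + x) ^+ #|S|.
Proof.
elim/set_ind_card: S => [|a S aS IH]; first by rewrite sum_sub0 !cards0 !expr0.
rewrite sum_subU1 // cardsU1 aS /= exprS -IH mulr_sumr; apply: eq_bigr => T sT.
have aT : a \notin T by apply/negP => /(subsetP sT); rewrite (negbTE aS).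
by rewrite cardsU1 aT /= exprS mulrDl mul1r.
Qed.

Lemma walsh n (C L : {set 'I_n}) :
  \sum_(Z : {set 'I_n} | Z \subset C) (-1) ^+ #|L :&: Z| = if [disjoint L & C] then 2%:R ^+ #|C| else 0 :> algC.
Proof.
elim/set_ind_card: C => [|a C aC IH].
  by rewrite sum_sub0 setI0 cards0 expr0 -setI_eq0 setI0 eqxx.
rewrite sum_subU1 //.
have dU : [disjoint L & a |: C] = (a \notin L) && [disjoint L & C].
  rewrite !disjE; apply/forallP/andP => [H|[aL /forallP H] i].
    split; first by move: (H a); rewrite !inE eqxx andbT.
    by apply/forallP => i; move: (H i); rewrite !inE; case: (i \in L); case: (i == a).
  by move: (H i) aL; rewrite !inE; case: eqP => [->|]; case: (a \in L).
rewrite dU; case: (boolP (a \in L)) => aL /=.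
  rewrite big1 // => Z sZ; have aZ : a \notin Z by apply/negP => /(subsetP sZ); rewrite (negbTE aC).
  have -> : L :&: (a |: Z) = a |: (L :&: Z) by apply/setP => i; rewrite !inE; case: eqP => [->|]; rewrite ?aL.
  by rewrite cardsU1 !inE (negbTE aZ) andbF /= exprS mulN1r addrN.
have eZ : forall Z, L :&: (a |: Z) = L :&: Z.
  by move=> Z; apply/setP => i; rewrite !inE; case: eqP => [->|]; rewrite ?(negbTE aL).
rewrite cardsU1 aC /= exprS; case: ifP => dLC; rewrite dLC in IH.
  rewrite -IH mulr_sumr; apply: eq_bigr => Z _.
  by rewrite eZ mulr_natl mulr2n.
rewrite -[RHS](mulr0 2%:R) -[in RHS]IH mulr_sumr; apply: eq_bigr => Z _.
by rewrite eZ mulr_natl mulr2n.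
Qed.

Lemma ent_bK n (K X Y : {set 'I_n}) : ent (bK K) X Y = (X == Y)%:R * (-1) ^+ #|K :&: X|.
Proof.
rewrite /bK ent_sum.
under eq_bigr do rewrite ent_scale ent_nS.
case: (X =P Y) => [_|_] /=; last by rewrite mul0r big1 // => T _; rewrite mulr0.
rewrite mul1r /=.
rewrite (eq_bigr (fun T : {set 'I_n} => if T \subset X then (-2) ^+ #|T| else 0)); last first.
  by move=> T _; case: (T \subset X); rewrite ?mulr1 ?mulr0.
rewrite -big_mkcondr /= (eq_bigl (fun T : {set 'I_n} => T \subset K :&: X)); last first.
  by move=> T; rewrite subsetI.
by rewrite powsum mulr2n opprD addrA subrr add0r.
Qed.

Lemma ent_G n (K P Q X Y : {set 'I_n}) :
  ent (bK K *m cAB P Q) X Y = (-1) ^+ #|K :&: X| * ent (cAB P Q) X Y.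
Proof.
rewrite ent_mul (bigD1 X) //= big1 ?addr0; first by rewrite ent_bK eqxx mul1r.
by move=> Z nZ; rewrite ent_bK eq_sym (negbTE nZ) mul0r mul0r.
Qed.

Lemma frm_mulX n (P Q : {set 'I_n}) (f : {set 'I_n} -> algC) c c' X Y :
  (forall Z : {set 'I_n}, [disjoint P & Z] -> f (P :|: Z) * c Z = c' Z) ->
  f X * frm P Q c X Y = frm P Q c' X Y.
Proof.
move=> H; rewrite /frm mulr_sumr; apply: eq_bigr => Z _.
case: ifP => [/and4P [dPZ _ /eqP -> _]|_]; [exact: H | by rewrite mulr0].
Qed.

Lemma ent_Gf n (K P Q X Y : {set 'I_n}) : [disjoint K & P] ->
  ent (bK K *m cAB P Q) X Y =
  frm P Q (fun Z => (-1) ^+ #|K :&: Z| * (wsign P Z * wsign Q Z)) X Y.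
Proof.
move=> dKP; rewrite ent_G ent_cAB; apply: (@frm_mulX _ _ _ (fun X0 : {set 'I_n} => (-1) ^+ #|K :&: X0|)) => Z dPZ.
by have -> : K :&: (P :|: Z) = K :&: Z by setsolve.
Qed.

Lemma forall_imply (T : finType) (a b : pred T) : (forall i, a i -> b i) -> [forall i, a i] -> [forall i, b i].
Proof. by move=> H /forallP A; apply/forallP => i; apply/H/A. Qed.

Lemma frm_at n (P Q P' Q' Z : {set 'I_n}) c' :
  [disjoint P & Q] -> [disjoint P' & Q'] -> [disjoint P & Z] -> [disjoint Q & Z] ->
  frm P' Q' c' (P :|: Z) (Q :|: Z) = if (P == P') && (Q == Q') then c' Z else 0.
Proof.
move=> dPQ dPQ' dPZ dQZ; rewrite frmE; case E: ((P == P') && (Q == Q')).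
  move/andP: E => [/eqP <- /eqP <-].
  have -> : (P :|: Z) :\: P = Z by setsolve.
  by rewrite dPZ dQZ !eqxx.
rewrite ifF //; apply: contraFF E.
rewrite !eqsetE !disjE !andfa; apply: forall_imply => i; gen_dsj i; rewrite !inE; brute.
Qed.

Lemma collapse2 n (F : {set 'I_n} -> {set 'I_n} -> algC) (b1 b2 : bool) A B :
  \sum_(X : {set 'I_n}) \sum_(Y : {set 'I_n}) (if [&& b1, b2, X == A & Y == B] then F X Y else 0)
  = if b1 && b2 then F A B else 0.
Proof.
rewrite (bigD1 A) //= [X in _ + X]big1 ?addr0; last first.
  by move=> X nX; rewrite big1 // => Y _; rewrite (negbTE nX) !andbF.
rewrite (bigD1 B) //= big1 ?addr0; last by move=> Y nY; rewrite (negbTE nY) !andbF.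
by rewrite !eqxx !andbT.
Qed.

Lemma hs_frm n (M M' : op n) (P Q P' Q' : {set 'I_n}) c c' :
  (forall X Y, ent M X Y = frm P Q c X Y) -> (forall X Y, ent M' X Y = frm P' Q' c' X Y) ->
  [disjoint P & Q] -> [disjoint P' & Q'] ->
  hs M M' = if (P == P') && (Q == Q') then
     \sum_(Z : {set 'I_n} | [disjoint P & Z] && [disjoint Q & Z]) (c Z)^* * c' Z else 0.
Proof.
move=> HM HM' dPQ dPQ'; rewrite hs_ent.
have E : forall X Y, (ent M X Y)^* * ent M' X Y = \sum_(Z : {set 'I_n})
    (if [&& [disjoint P & Z], [disjoint Q & Z], X == P :|: Z & Y == Q :|: Z]
     then (c Z)^* * frm P' Q' c' (P :|: Z) (Q :|: Z) else 0).
  move=> X Y; rewrite HM HM' /frm rmorph_sum mulr_suml; apply: eq_bigr => Z _.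
  case: ifP => [/and4P [_ _ /eqP -> /eqP ->]|_]; last by rewrite rmorph0 mul0r.
  by [].
under eq_bigr do under eq_bigr do rewrite E.
under eq_bigr do rewrite exchange_big /=.
rewrite exchange_big /=.
under eq_bigr do rewrite collapse2.
case: ifP => eqs.
  rewrite [RHS]big_mkcond /=; apply: eq_bigr => Z _; case: ifP => // /andP [dPZ dQZ].
  by rewrite frm_at // eqs.
rewrite big1 // => Z _; case: ifP => // /andP [dPZ dQZ].
by rewrite frm_at // eqs mulr0.
Qed.

Definition G n (K P Q : {set 'I_n}) : op n := bK K *m cAB P Q.

Lemma sq_sign (k : nat) : (-1) ^+ k * (-1) ^+ k = 1 :> algC.
Proof. by rewrite -exprD addnn -mul2n exprM expr2 mulrNN mulr1 expr1n. Qed.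
Lemma conj_sign (k : nat) : ((-1) ^+ k)^* = (-1) ^+ k :> algC.
Proof. by rewrite rmorphXn rmorphN1. Qed.

Lemma card_disjU n (A B : {set 'I_n}) : [disjoint A & B] -> #|A :|: B| = (#|A| + #|B|)%N.
Proof. by move=> d; rewrite cardsU; move: d; rewrite -setI_eq0 => /eqP ->; rewrite cards0 subn0. Qed.

Lemma card_split (T : finType) (A B C : {set T}) : A = B :|: C -> [disjoint B & C] -> #|A| = (#|B| + #|C|)%N.
Proof. by move=> -> d; rewrite cardsU; move: d; rewrite -setI_eq0 => /eqP ->; rewrite cards0 subn0. Qed.

Lemma sign_pair n (K K' Z : {set 'I_n}) :
  (-1) ^+ #|K :&: Z| * (-1) ^+ #|K' :&: Z| = (-1) ^+ #|((K :\: K') :|: (K' :\: K)) :&: Z| :> algC.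
Proof.
have e1 : #|K :&: Z| = (#|(K :\: K') :&: Z| + #|(K :&: K') :&: Z|)%N.
  apply: card_split; first by setsolve.
  by rewrite disjE; apply/forallP => i; rewrite !inE; brute.
have e2 : #|K' :&: Z| = (#|(K' :\: K) :&: Z| + #|(K :&: K') :&: Z|)%N.
  apply: card_split; first by setsolve.
  by rewrite disjE; apply/forallP => i; rewrite !inE; brute.
have e3 : #|((K :\: K') :|: (K' :\: K)) :&: Z| = (#|(K :\: K') :&: Z| + #|(K' :\: K) :&: Z|)%N.
  apply: card_split; first by setsolve.
  by rewrite disjE; apply/forallP => i; rewrite !inE; brute.
by rewrite e1 e2 e3 !exprD mulrACA sq_sign mulr1.
Qed.

Lemma conjM (x y : algC) : (x * y)^* = x^* * y^*.
Proof. exact: rmorphM. Qed.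

Lemma conj_sum (I : finType) (P : pred I) (F : I -> algC) :
  (\sum_(i | P i) F i)^* = \sum_(i | P i) (F i)^*.
Proof. exact: rmorph_sum. Qed.
Lemma conjD (x y : algC) : (x + y)^* = x^* + y^*.
Proof. exact: rmorphD. Qed.
Lemma conjB (x y : algC) : (x - y)^* = x^* - y^*.
Proof. exact: rmorphB. Qed.

Lemma sq4 (a b u v : algC) : u * u = 1 -> v * v = 1 -> (a * (u * v)) * (b * (u * v)) = a * b.
Proof. by move=> hu hv; rewrite mulrACA [(u * v) * _]mulrACA hu hv !mulr1. Qed.

Lemma hs_G n (K P Q K' P' Q' : {set 'I_n}) :
  [disjoint K & P] -> [disjoint K & Q] -> [disjoint P & Q] ->
  [disjoint K' & P'] -> [disjoint K' & Q'] -> [disjoint P' & Q'] ->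
  hs (G K P Q) (G K' P' Q') = ([&& K == K', P == P' & Q == Q'])%:R * 2%:R ^+ #|~: (P :|: Q)|.
Proof.
move=> dKP dKQ dPQ dKP' dKQ' dPQ'.
have H1 := fun X Y => ent_Gf Q X Y dKP.
have H2 := fun X Y => ent_Gf Q' X Y dKP'.
rewrite (hs_frm H1 H2 dPQ dPQ').
case: (P =P P') => [eP|nP]; last by rewrite /= andbF mul0r.
case: (Q =P Q') => [eQ|nQ]; last by rewrite /= !andbF mul0r.
subst P' Q'; rewrite /= !andbT.
under eq_bigr => Z _ do rewrite !conjM conj_sign !conj_wsign sq4 ?wsign_sq // sign_pair.
rewrite (eq_bigl (fun Z : {set 'I_n} => Z \subset ~: (P :|: Q))); last first.
  by move=> Z; rewrite /= -!setI_eq0; fasolve.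
rewrite walsh.
have -> : [disjoint (K :\: K') :|: (K' :\: K) & ~: (P :|: Q)] = (K == K').
  rewrite disjE eqsetE; apply: eq_forallb => i; gen_dsj i; rewrite !inE; brute.
by case: (K == K'); rewrite ?mul1r ?mul0r.
Qed.

Lemma conj_frm n (P Q : {set 'I_n}) (c : {set 'I_n} -> algC) (X Y : {set 'I_n}) :
  (frm P Q c Y X)^* = frm Q P (fun Z => (c Z)^*) X Y.
Proof.
rewrite /frm rmorph_sum; apply: eq_bigr => Z _.
by case: [disjoint P & Z]; case: [disjoint Q & Z]; case: (Y == _); case: (X == _);
  rewrite /= ?rmorph0.
Qed.

Lemma adj_G n (K P Q : {set 'I_n}) : [disjoint K & P] -> [disjoint K & Q] ->
  adj (G K P Q) = G K Q P.
Proof.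
move=> dKP dKQ; apply: ent_ext => X Y; rewrite ent_adj /G !ent_Gf // conj_frm.
rewrite /frm; apply: eq_bigr => Z _.
by rewrite !conjM conj_sign !conj_wsign [wsign P Z * _]mulrC.
Qed.

Lemma bK_G n (K : {set 'I_n}) : bK K = G K set0 set0.
Proof.
apply: ent_ext => X Y; rewrite /G ent_G -[cAB set0 set0]/(nS set0) ent_nS ent_bK sub0set andbT.
by rewrite mulrC.
Qed.

Lemma adj_bK n (K : {set 'I_n}) : adj (bK K) = bK K.
Proof. by rewrite bK_G adj_G // -setI_eq0 setI0. Qed.

Lemma wsignUl n (A A' B : {set 'I_n}) : [disjoint A & A'] ->
  wsign (A :|: A') B = wsign A B * wsign A' B.
Proof.
move=> d; rewrite /wsign -exprD; congr (_ ^+ _); apply: card_split.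
  by apply/setP => p; rewrite !inE; brute.
rewrite disjE; apply/forallP => p; rewrite !inE; move: (disjI d p.1); brute.
Qed.

Lemma wsignUr n (A B B' : {set 'I_n}) : [disjoint B & B'] ->
  wsign A (B :|: B') = wsign A B * wsign A B'.
Proof.
move=> d; rewrite /wsign -exprD; congr (_ ^+ _); apply: card_split.
  by apply/setP => p; rewrite !inE; brute.
rewrite disjE; apply/forallP => p; rewrite !inE; move: (disjI d p.2); brute.
Qed.

Lemma cAB_split n (T P Q : {set 'I_n}) : [disjoint T & P] -> [disjoint T & Q] ->
  cAB (T :|: P) (T :|: Q) = (wsign P T * wsign Q T) *: (nS T *m cAB P Q).
Proof.
move=> dTP dTQ; apply: ent_ext => X Y.
rewrite ent_scale ent_mul (bigD1 X) //= big1 ?addr0; last first.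
  by move=> Z nZ; rewrite ent_nS eq_sym (negbTE nZ) mul0r.
rewrite ent_nS eqxx /= !ent_cAB !frmE.
set c1 := [&& _, _, _ & _]; set c2 := [&& _, _, _ & _].
have ec : c1 = (T \subset X) && c2.
  rewrite /c1 /c2 !eqsetE !disjE !subE !andfa; apply: eq_forallb => i.
  gen_dsj i; rewrite !inE; brute.
rewrite ec; case: (boolP (T \subset X)) => TX /=; last by rewrite !mul0r mulr0.
rewrite mul1r /c2; case: ifP => [/and4P [d1 d2 /eqP eX _]|_]; last by rewrite mulr0.
have e1 : X :\: P = T :|: (X :\: (T :|: P)).
  apply/setP => i; move: (subsetP TX i) => /implyP; gen_dsj i; rewrite !inE; brute.
have dZ : [disjoint T & X :\: (T :|: P)].
  rewrite disjE; apply/forallP => i; rewrite !inE; brute.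
rewrite e1 !wsignUl // !wsignUr //.
set a := wsign P T; set b := wsign Q T; set u := wsign P _; set v := wsign Q _.
have ha : a * a = 1 by apply: wsign_sq.
have hb : b * b = 1 by apply: wsign_sq.
rewrite mulrACA wsign_sq mul1r; transitivity (u * v * ((a * a) * (b * b))); first by rewrite ha hb !mulr1.
ring.
Qed.

Lemma nS_walsh n (T : {set 'I_n}) :
  (2%:R ^+ #|T|) *: nS T = \sum_(K : {set 'I_n} | K \subset T) (-1) ^+ #|K| *: bK K.
Proof.
apply: ent_ext => X Y; rewrite ent_scale ent_nS ent_sum.
under eq_bigr do rewrite ent_scale ent_bK.
case: (X =P Y) => _ /=; last by rewrite mulr0 big1 // => K _; rewrite mul0r mulr0.
rewrite (eq_bigr (fun K => (-1) ^+ #|((T :\: X) :|: (X :\: T)) :&: K|)); last first.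
  move=> K sK; rewrite mul1r -sign_pair (setIC X) (setIidPr sK) //.
rewrite walsh.
have -> : [disjoint (T :\: X) :|: (X :\: T) & T] = (T \subset X).
  rewrite disjE subE; apply: eq_forallb => i; rewrite !inE; brute.
by case: (T \subset X); rewrite ?mulr1 ?mulr0.
Qed.

Lemma adjD n (M N : op n) : adj (M + N) = adj M + adj N.
Proof. by apply: ent_ext => X Y; rewrite !(ent_adj, ent_add) conjD. Qed.
Lemma adjB n (M N : op n) : adj (M - N) = adj M - adj N.
Proof. by apply: ent_ext => X Y; rewrite !(ent_adj, ent_sub) conjB. Qed.
Lemma adjZ n c (M : op n) : adj (c *: M) = c^* *: adj M.
Proof. by apply: ent_ext => X Y; rewrite !(ent_adj, ent_scale) conjM. Qed.
Lemma adjM n (M N : op n) : adj (M *m N) = adj N *m adj M.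
Proof.
apply: ent_ext => X Y; rewrite ent_adj !ent_mul conj_sum; apply: eq_bigr => Z _.
by rewrite !ent_adj conjM mulrC.
Qed.
Lemma adjK n (M : op n) : adj (adj M) = M.
Proof. by apply: ent_ext => X Y; rewrite !ent_adj conjCK. Qed.
Lemma adj_sum n (I : finType) (P : pred I) (F : I -> op n) :
  adj (\sum_(i | P i) F i) = \sum_(i | P i) adj (F i).
Proof.
apply: ent_ext => X Y; rewrite ent_adj !ent_sum conj_sum; apply: eq_bigr => i _.
by rewrite ent_adj.
Qed.

Lemma hsDr n (M N N' : op n) : hs M (N + N') = hs M N + hs M N'.
Proof. by rewrite /hs mulmxDr mxtraceD. Qed.
Lemma hsZr n c (M N : op n) : hs M (c *: N) = c * hs M N.
Proof. by rewrite /hs -scalemxAr mxtraceZ. Qed.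
Lemma hs0r n (M : op n) : hs M 0 = 0.
Proof. by rewrite /hs mulmx0 mxtrace0. Qed.
Lemma hsNr n (M N : op n) : hs M (- N) = - hs M N.
Proof. by rewrite -scaleN1r hsZr mulN1r. Qed.
Lemma hsBr n (M N N' : op n) : hs M (N - N') = hs M N - hs M N'.
Proof. by rewrite hsDr hsNr. Qed.
Lemma hs_sumr n (I : finType) (P : pred I) (F : I -> op n) M :
  hs M (\sum_(i | P i) F i) = \sum_(i | P i) hs M (F i).
Proof. by apply: (big_morph (hs M)); [apply: hsDr | apply: hs0r]. Qed.
Lemma hs_conj n (M N : op n) : (hs M N)^* = hs N M.
Proof.
rewrite !hs_ent conj_sum; apply: eq_bigr => X _.
rewrite conj_sum; apply: eq_bigr => Y _.
by rewrite conjM conjCK mulrC.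
Qed.

Definition cc n (P Q : {set 'I_n}) : algC := sqrtC 2 ^- (n + 1 - #|P :|: Q|)%N.
Definition trp n (x : bidx n) : {set 'I_n} * {set 'I_n} * {set 'I_n} :=
  match x with inl K => (K, set0, set0) | inr (K, P, Q, _) => (K, P, Q) end.
Definition ca n (x : bidx n) : algC :=
  match x with inl K => sqrtC 2 ^- n / 2 | inr (K, P, Q, b) => cc P Q * (if b then 1 else - 'i) end.
Definition cb n (x : bidx n) : algC :=
  match x with inl K => sqrtC 2 ^- n / 2 | inr (K, P, Q, b) => cc P Q * (if b then 1 else 'i) end.

Lemma bfam_dec n (x : bidx n) : let: (K, P, Q) := trp x in
  bfam x = ca x *: G K P Q + cb x *: G K Q P.
Proof.
case: x => [K|[[[K P] Q] b]] /=.
  by rewrite -scalerDl -splitr bK_G.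
rewrite -/(cc P Q); case: b.
  by rewrite !mulr1 mulmxDr scalerDr.
by rewrite mulmxBr scalerBr scalerDr scalerA scalerN scalerA -scaleNr mulrN opprK.
Qed.

Definition dsj3 n (t : {set 'I_n} * {set 'I_n} * {set 'I_n}) :=
  let: (K, P, Q) := t in [&& [disjoint K & P], [disjoint K & Q] & [disjoint P & Q]].

Lemma valid_dsj n (lt : rel {set 'I_n}) (x : bidx n) : bvalid lt x -> dsj3 (trp x).
Proof.
case: x => [K|[[[K P] Q] b]] /=.
  by rewrite -!setI_eq0 !setI0 eqxx.
by case/and4P => -> -> -> _.
Qed.

Lemma hs_exp n (a b a' b' : algC) (M1 M2 N1 N2 : op n) :
  hs (a *: M1 + b *: M2) (a' *: N1 + b' *: N2) =
  a^* * a' * hs M1 N1 + a^* * b' * hs M1 N2 + b^* * a' * hs M2 N1 + b^* * b' * hs M2 N2.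
Proof.
have hl : forall (c : algC) (M N : op n), hs (c *: M) N = c^* * hs M N.
  by move=> c M N; rewrite -hs_conj hsZr conjM hs_conj.
have hD : forall (M M' N : op n), hs (M + M') N = hs M N + hs M' N.
  by move=> M M' N; rewrite -hs_conj hsDr conjD !hs_conj.
rewrite !hsDr !hD !hsZr !hl.
ring.
Qed.

Lemma sqrt2_ge0 : 0 <= sqrtC (2%:R : algC).
Proof. by rewrite sqrtC_ge0 ler0n. Qed.

Lemma conj_c (k : nat) : (sqrtC (2%:R : algC) ^- k)^* = sqrtC 2 ^- k.
Proof. by apply: geC0_conj; rewrite invr_ge0 exprn_ge0 // sqrt2_ge0. Qed.

Lemma csq (k : nat) : sqrtC (2%:R : algC) ^- k * sqrtC 2 ^- k * 2%:R ^+ k = 1.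
Proof.
rewrite -invfM -exprMn -expr2 sqrtCK mulVf // expf_neq0 // pnatr_eq0 //.
Qed.

Lemma conj1C : (1 : algC)^* = 1. Proof. exact: rmorph1. Qed.
Lemma conjNC (x : algC) : (- x)^* = - x^*. Proof. exact: rmorphN. Qed.
Lemma iiC : 'i * 'i = -1 :> algC. Proof. by rewrite -expr2 sqrCi. Qed.

Lemma cardC0 n : #|~: (set0 : {set 'I_n})| = n.
Proof. by rewrite setC0 cardsT card_ord. Qed.

Lemma hkey n (P Q : {set 'I_n}) :
  cc P Q * cc P Q * (2 * 2%:R ^+ #|~: (P :|: Q)|) = 1.
Proof.
have e : #|~: (P :|: Q)| = (n - #|P :|: Q|)%N.
  by rewrite cardsCs setCK card_ord.
have le : (#|P :|: Q| <= n)%N by rewrite -[X in (_ <= X)%N](card_ord n) max_card.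
rewrite /cc e -exprS; have -> : (n + 1 - #|P :|: Q|)%N = (n - #|P :|: Q|).+1 by rewrite addn1 subSn.
exact: csq.
Qed.

Lemma bfam_on n (lt : rel {set 'I_n}) (lt_irr : irreflexive lt) (lt_trans : transitive lt)
  (x y : bidx n) : bvalid lt x -> bvalid lt y -> hs (bfam x) (bfam y) = (x == y)%:R.
Proof.
move=> vx vy; have dx := valid_dsj vx; have dy := valid_dsj vy.
have := bfam_dec x; have := bfam_dec y.
case: x vx dx => [K|[[[K P] Q] b]]; case: y vy dy => [K'|[[[K' P'] Q'] b']] /= vy dy vx dx -> ->.
- move/and3P: dx => [d1 d2 d3]; move/and3P: dy => [d1' d2' d3'].
  rewrite hs_exp !hs_G // !eqxx !andbT setU0 cardC0.
  have hc : (sqrtC 2 ^- n / 2 : algC)^* = sqrtC 2 ^- n / 2.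
    by apply: geC0_conj; rewrite divr_ge0 ?ler0n // invr_ge0 exprn_ge0 // sqrt2_ge0.
  rewrite hc; have -> : (inl K == inl K' :> bidx n) = (K == K') by [].
  case: (K == K'); last by rewrite !mul0r !mulr0 !addr0.
  have h := csq n; set c := sqrtC 2 ^- n in h *; set t := (2%:R ^+ n : algC) in h *.
  rewrite /= !mul1r; transitivity (c * c * t); last exact: h.
  by field.
- move/and3P: dx => [d1 d2 d3]; move/and4P: vy => [d1' d2' d3' l'].
  have s3' : [disjoint Q' & P'] by rewrite disjoint_sym.
  rewrite hs_exp !hs_G //.
  have nPQ : (P' == Q') = false by apply/negbTE/eqP => e; move: l'; rewrite e lt_irr.
  have z1 : (set0 == P') && (set0 == Q') = false.
    by apply/negbTE/negP => /andP [/eqP e1 /eqP e2]; move: nPQ; rewrite -e1 -e2 eqxx.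
  have z2 : (set0 == Q') && (set0 == P') = false by rewrite andbC.
  by rewrite z1 z2 !andbF !mul0r !mulr0 !addr0.
- move/and3P: dy => [f1 f2 f3]; move/and4P: vx => [f1' f2' f3' l'].
  have s3' : [disjoint Q & P] by rewrite disjoint_sym.
  rewrite hs_exp !hs_G //.
  have nPQ : (P == Q) = false by apply/negbTE/eqP => e; move: l'; rewrite e lt_irr.
  have z1 : (P == set0) && (Q == set0) = false.
    by apply/negbTE/negP => /andP [/eqP e1 /eqP e2]; move: nPQ; rewrite e1 e2 eqxx.
  have z2 : (Q == set0) && (P == set0) = false by rewrite andbC.
  by rewrite z1 z2 !andbF !mul0r !mulr0 !addr0.
- move/and4P: vx => [d1 d2 d3 l]; move/and4P: vy => [d1' d2' d3' l'].
  have s3 : [disjoint Q & P] by rewrite disjoint_sym.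
  have s3' : [disjoint Q' & P'] by rewrite disjoint_sym.
  rewrite hs_exp !hs_G //.
  have sw1 : (P == Q') && (Q == P') = false.
    apply/negbTE/negP => /andP [/eqP e1 /eqP e2]; subst P Q.
    by have := lt_trans _ _ _ l' l; rewrite lt_irr.
  have sw2 : (Q == P') && (P == Q') = false by rewrite andbC.
  rewrite sw1 sw2 !andbF !mul0r !mulr0 ?addr0.
  case: (K =P K') => [eK|nK]; last first.
    have -> : (inr (K, P, Q, b) == inr (K', P', Q', b') :> bidx n) = false.
      by apply/eqP => -[eK _ _ _]; apply: nK.
    by rewrite ?andbF ?andbT /= ?mul0r ?mulr0 ?addr0 ?add0r.
  subst K'.
  case: (P =P P') => [eP|nP]; last first.
    have -> : (inr (K, P, Q, b) == inr (K, P', Q', b') :> bidx n) = false.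
      by apply/eqP => -[eP _ _]; apply: nP.
    by rewrite ?andbF ?andbT /= ?mul0r ?mulr0 ?addr0 ?add0r.
  subst P'; case: (Q =P Q') => [eQ|nQ]; last first.
    have -> : (inr (K, P, Q, b) == inr (K, P, Q', b') :> bidx n) = false.
      by apply/eqP => -[eQ _]; apply: nQ.
    by rewrite ?andbF ?andbT /= ?mul0r ?mulr0 ?addr0 ?add0r.
  subst Q'; rewrite /= [Q :|: P]setUC !mul1r.
  have h := hkey P Q; set c := cc P Q in h *; set t := (2%:R ^+ #|~: (P :|: Q)| : algC) in h *.
  have cr : c^* = c by apply: conj_c.
  case: b; case: b'; rewrite !conjM cr ?conj1C ?conjNC ?conjCi ?opprK.
  + rewrite eqxx mulr1n; transitivity (c * c * (2 * t)); last exact: h.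
    by ring.
  + have -> : (inr (K, P, Q, true) == inr (K, P, Q, false) :> bidx n) = false.
      by apply/eqP => -[].
    by rewrite mulr0n; ring.
  + have -> : (inr (K, P, Q, false) == inr (K, P, Q, true) :> bidx n) = false.
      by apply/eqP => -[].
    by rewrite mulr0n; ring.
  + rewrite eqxx mulr1n; transitivity (c * c * (2 * t) * - ('i * 'i)); last by rewrite iiC opprK mulr1.
    by ring.
Qed.

Lemma conj_cc n (P Q : {set 'I_n}) : (cc P Q)^* = cc P Q.
Proof. exact: conj_c. Qed.

Lemma conj_ca n (x : bidx n) : (ca x)^* = cb x.
Proof.
case: x => [K|[[[K P] Q] b]] /=.
  by apply: geC0_conj; rewrite divr_ge0 ?ler0n // invr_ge0 exprn_ge0 // sqrt2_ge0.
by case: b; rewrite conjM conj_cc ?conj1C // conjNC conjCi opprK.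
Qed.
Lemma conj_cb n (x : bidx n) : (cb x)^* = ca x.
Proof. by rewrite -conj_ca conjCK. Qed.

Lemma bfam_sa n (lt : rel {set 'I_n}) (x : bidx n) : bvalid lt x -> adj (bfam x) = bfam x.
Proof.
move=> vx; have := valid_dsj vx; have := bfam_dec x.
case: (trp x) => [[K P] Q] -> /and3P [d1 d2 d3].
by rewrite adjD !adjZ !adj_G // conj_ca conj_cb addrC.
Qed.

Definition inspan n (lt : rel {set 'I_n}) (M : op n) :=
  exists a : bidx n -> algC, M = \sum_(x | bvalid lt x) a x *: bfam x.

Lemma inspan0 n lt : @inspan n lt 0.
Proof. by exists (fun _ => 0); rewrite big1 // => x _; rewrite scale0r. Qed.
Lemma inspanD n lt (M N : op n) : inspan lt M -> inspan lt N -> inspan lt (M + N).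
Proof.
move=> [a ->] [b ->]; exists (fun x => a x + b x); rewrite -big_split /=.
by apply: eq_bigr => x _; rewrite scalerDl.
Qed.
Lemma inspanZ n lt c (M : op n) : inspan lt M -> inspan lt (c *: M).
Proof.
move=> [a ->]; exists (fun x => c * a x); rewrite scaler_sumr.
by apply: eq_bigr => x _; rewrite scalerA.
Qed.
Lemma inspan_sum n lt (I : finType) (P : pred I) (F : I -> op n) :
  (forall i, P i -> inspan lt (F i)) -> inspan lt (\sum_(i | P i) F i).
Proof.
move=> H; apply: (big_ind (inspan lt)); [exact: inspan0 | exact: inspanD | exact: H].
Qed.
Lemma inspan_bfam n lt (x : bidx n) : bvalid lt x -> inspan lt (bfam x).
Proof.
move=> vx; exists (fun y => (y == x)%:R); rewrite (bigD1 x) //= eqxx scale1r big1 ?addr0 //.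
by move=> y /andP [_ /negbTE ->]; rewrite scale0r.
Qed.

Lemma sqrt2_neq0 : sqrtC (2%:R : algC) != 0.
Proof. by rewrite sqrtC_eq0 pnatr_eq0. Qed.
Lemma cc_neq0 n (P Q : {set 'I_n}) : cc P Q != 0.
Proof. by rewrite /cc invr_eq0 expf_neq0 // sqrt2_neq0. Qed.

Lemma inspan_G n (lt : rel {set 'I_n}) (lt_total : forall A B, A != B -> lt A B || lt B A)
  (K P Q : {set 'I_n}) : [disjoint K & P] -> [disjoint K & Q] -> [disjoint P & Q] ->
  inspan lt (G K P Q).
Proof.
move=> dKP dKQ dPQ.
case: (P =P Q) => [ePQ|nPQ].
  subst Q; have P0 : P = set0 by move: dPQ; rewrite -setI_eq0 setIid => /eqP.
  subst P; rewrite -bK_G.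
  have c0 : sqrtC (2%:R : algC) ^- n != 0 by rewrite invr_eq0 expf_neq0 // sqrt2_neq0.
  rewrite -[bK K]scale1r -(mulVf c0) -scalerA.
  by apply: inspanZ; apply: (inspan_bfam (x := inl K)).
have cn := cc_neq0 P Q; have c2 : 2 * cc P Q != 0 by rewrite mulf_neq0 // pnatr_eq0.
case/orP: (lt_total _ _ (introN eqP nPQ)) => l.
  have e : (2 * cc P Q) *: G K P Q = bfam (inr (K, P, Q, true)) + 'i *: bfam (inr (K, P, Q, false)).
    have := bfam_dec (inr (K, P, Q, true)); have := bfam_dec (inr (K, P, Q, false)).
    rewrite /= => -> ->; apply: ent_ext => X Y; rewrite !(ent_add, ent_scale).
    rewrite [RHS](_ : _ = cc P Q * ent (G K P Q) X Y + cc P Q * ent (G K Q P) X Y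
        - ('i * 'i) * cc P Q * ent (G K P Q) X Y + ('i * 'i) * cc P Q * ent (G K Q P) X Y);
      last by ring.
    by rewrite iiC; ring.
  rewrite -[G K P Q]scale1r -(mulVf c2) -scalerA e.
  apply: inspanZ; apply: inspanD; [apply: inspan_bfam | apply: inspanZ; apply: inspan_bfam];
    by rewrite /= dKP dKQ dPQ l.
have dQP : [disjoint Q & P] by rewrite disjoint_sym.
have e : (2 * cc P Q) *: G K P Q = bfam (inr (K, Q, P, true)) - 'i *: bfam (inr (K, Q, P, false)).
  have := bfam_dec (inr (K, Q, P, true)); have := bfam_dec (inr (K, Q, P, false)).
  have ecc : cc Q P = cc P Q by rewrite /cc setUC.
  rewrite /= -/(cc Q P) ecc => -> ->; apply: ent_ext => X Y; rewrite !(ent_add, ent_opp, ent_scale).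
  rewrite [RHS](_ : _ = cc P Q * ent (G K Q P) X Y + cc P Q * ent (G K P Q) X Y
      + ('i * 'i) * cc P Q * ent (G K Q P) X Y - ('i * 'i) * cc P Q * ent (G K P Q) X Y);
    last by ring.
  by rewrite iiC; ring.
rewrite -[G K P Q]scale1r -(mulVf c2) -scalerA e.
apply: inspanZ; apply: inspanD; [apply: inspan_bfam | rewrite -scaleNr; apply: inspanZ; apply: inspan_bfam];
  by rewrite /= dKQ dKP dQP l.
Qed.

Definition U n (X0 Y0 : {set 'I_n}) : op n := delta_mx (rankOf X0) (rankOf Y0).

Lemma ent_U n (X0 Y0 X Y : {set 'I_n}) : ent (U X0 Y0) X Y = ((X == X0) && (Y == Y0))%:R.
Proof.
rewrite /ent /U mxE.
by rewrite !(inj_eq (can_inj (@rankOfK n))).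
Qed.

Lemma op_expand n (M : op n) : M = \sum_(X0 : {set 'I_n}) \sum_(Y0 : {set 'I_n}) ent M X0 Y0 *: U X0 Y0.
Proof.
apply: ent_ext => X Y; rewrite ent_sumT.
under eq_bigr do rewrite ent_sumT.
under eq_bigr do under eq_bigr do rewrite ent_scale ent_U.
rewrite (bigD1 X) //= [X in _ + X]big1 ?addr0; last first.
  by move=> X0 nX0; rewrite big1 // => Y0 _; rewrite eq_sym (negbTE nX0) mulr0.
rewrite (bigD1 Y) //= big1 ?addr0; last first.
  by move=> Y0 nY0; rewrite eqxx eq_sym (negbTE nY0) mulr0.
by rewrite !eqxx mulr1.
Qed.

Lemma U_dec n (X0 Y0 : {set 'I_n}) :
  let P := X0 :\: Y0 in let Q := Y0 :\: X0 in let Z0 := X0 :&: Y0 in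
  (2%:R ^+ #|~: (P :|: Q)| * (wsign P Z0 * wsign Q Z0)) *: U X0 Y0 =
  \sum_(K : {set 'I_n} | K \subset ~: (P :|: Q)) (-1) ^+ #|K :&: Z0| *: G K P Q.
Proof.
move=> P Q Z0; apply: ent_ext => X Y; rewrite ent_scale ent_U ent_sum.
rewrite (eq_bigr (fun K => (-1) ^+ #|K :&: Z0| *
   frm P Q (fun Z => (-1) ^+ #|K :&: Z| * (wsign P Z * wsign Q Z)) X Y)); last first.
  move=> K sK; rewrite ent_scale /G ent_Gf //.
  by rewrite disjoints_subset; apply: subset_trans sK _; rewrite setCS subsetUl.
under eq_bigr do rewrite frmE.
set Z1 := X :\: P; set cnd := [&& _, _, _ & _].
case: (boolP cnd) => hc; last first.
  have -> : ((X == X0) && (Y == Y0)) = false.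
    apply/negbTE; apply: contra hc => /andP [/eqP eX /eqP eY].
    rewrite /cnd /Z1 eX eY /P /Q; apply/and4P; split; fatrue.
  by rewrite mulr0 big1 // => K _; rewrite mulr0.
rewrite (eq_bigr (fun K => (wsign P Z1 * wsign Q Z1) *
    (-1) ^+ #|((Z0 :\: Z1) :|: (Z1 :\: Z0)) :&: K|)); last first.
  by move=> K _; rewrite -sign_pair (setIC Z0) (setIC Z1); ring.
rewrite -mulr_sumr walsh.
have -> : [disjoint (Z0 :\: Z1) :|: (Z1 :\: Z0) & ~: (P :|: Q)] = (X == X0) && (Y == Y0).
  move: hc; rewrite /cnd /Z1 /P /Q /Z0 !eqsetE !disjE !andfa => /forallP hc.
  apply: eq_forallb => i; move: (hc i); rewrite !inE; brute.
case: (boolP ((X == X0) && (Y == Y0))) => [/andP [/eqP eX /eqP eY]|_]; last by rewrite !mulr0.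
have -> : Z1 = Z0 by rewrite /Z1 /Z0 /P eX; setsolve.
by rewrite mulr1 mulrC.
Qed.

Lemma inspan_U n (lt : rel {set 'I_n}) (lt_total : forall A B, A != B -> lt A B || lt B A)
  (X0 Y0 : {set 'I_n}) : inspan lt (U X0 Y0).
Proof.
have := U_dec X0 Y0; set P := X0 :\: Y0; set Q := Y0 :\: X0; set Z0 := X0 :&: Y0 => e.
have c0 : (2%:R ^+ #|~: (P :|: Q)| * (wsign P Z0 * wsign Q Z0)) != 0 :> algC.
  by rewrite /wsign !mulf_neq0 ?expf_neq0 ?pnatr_eq0 ?oppr_eq0 ?oner_eq0.
rewrite -[U X0 Y0]scale1r -(mulVf c0) -scalerA e; apply: inspanZ; apply: inspan_sum => K sK.
apply: inspanZ; apply: inspan_G => //.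
- by rewrite disjoints_subset; apply: subset_trans sK _; rewrite setCS subsetUl.
- by rewrite disjoints_subset; apply: subset_trans sK _; rewrite setCS subsetUr.
- by rewrite /P /Q disjE; apply/forallP => i; rewrite !inE; brute.
Qed.

Lemma bfam_span n (lt : rel {set 'I_n}) (lt_total : forall A B, A != B -> lt A B || lt B A)
  (M : op n) : inspan lt M.
Proof.
rewrite (op_expand M); apply: inspan_sum => X0 _; apply: inspan_sum => Y0 _.
by apply: inspanZ; apply: inspan_U.
Qed.

Lemma Ok0 n k : Ok k (0 : op n).
Proof.
exists 0%N, (fun _ => 0), (fun _ => 0%N), (fun _ => 0%N), (fun _ => 0), (fun _ => 0).
by split; [case | rewrite big_ord0].
Qed.

Lemma OkD n k (M N : op n) : Ok k M -> Ok k N -> Ok k (M + N).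
Proof.
move=> [m1 [c1 [r1 [s1 [o1 [e1 [H1 ->]]]]]]] [m2 [c2 [r2 [s2 [o2 [e2 [H2 ->]]]]]]].
pose sp (T : Type) (f1 : 'I_m1 -> T) (f2 : 'I_m2 -> T) (i : 'I_(m1 + m2)) :=
  match split i with inl j => f1 j | inr j => f2 j end.
exists (m1 + m2)%N, (sp _ c1 c2), (sp _ r1 r2), (sp _ s1 s2), (sp _ o1 o2), (sp _ e1 e2); split.
  by move=> i; rewrite /sp; case: (split i) => j; [exact: H1 | exact: H2].
rewrite big_split_ord /=; congr (_ + _); apply: eq_bigr => j _; rewrite /sp.
  by have := unsplitK (inl j : 'I_m1 + 'I_m2); rewrite /= => ->.
by have := unsplitK (inr j : 'I_m1 + 'I_m2); rewrite /= => ->.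
Qed.

Lemma OkZ n k c (M : op n) : Ok k M -> Ok k (c *: M).
Proof.
move=> [m [c1 [r [s [o [e [H ->]]]]]]].
exists m, (fun i => c * c1 i), r, s, o, e; split => //.
by rewrite scaler_sumr; apply: eq_bigr => i _; rewrite scalerA.
Qed.

Lemma Ok_sum n k (I : finType) (P : pred I) (F : I -> op n) :
  (forall i, P i -> Ok k (F i)) -> Ok k (\sum_(i | P i) F i).
Proof.
move=> H; apply: (big_ind (Ok k)); [exact: Ok0 | exact: OkD | exact: H].
Qed.

Lemma Ok_cAB n k (A B : {set 'I_n}) l : (#|A| + #|B| = 2 * l)%N -> (l <= k)%N -> Ok k (cAB A B).
Proof.
move=> e lk.
exists 1%N, (fun _ => 1), (fun _ => #|A|), (fun _ => #|B|), (fun _ => phi A), (fun _ => phi B); split.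
  move=> _; split; last by exists l.
    by move=> C nC; rewrite phiE; case: (C =P _) => [eCA|_] //; rewrite eCA eqxx in nC.
  by move=> C nC; rewrite phiE; case: (C =P _) => [eCA|_] //; rewrite eCA eqxx in nC.
by rewrite big_ord1 scale1r.
Qed.

Lemma cstar_lin n (om : fock n) : cstar om = \sum_(A : {set 'I_n}) om (rankOf A) 0 *: cstarS A.
Proof.
apply: ent_ext => X Y; rewrite ent_sumT.
under [RHS]eq_bigr do rewrite ent_scale ent_cstarS.
by rewrite /ent /cstar mxE !rankOfK.
Qed.

Lemma adj_sumT n (I : finType) (F : I -> op n) : adj (\sum_i F i) = \sum_i adj (F i).
Proof.
apply: ent_ext => X Y; rewrite ent_adj !ent_sumT conj_sum; apply: eq_bigr => i _.
by rewrite ent_adj.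
Qed.

Lemma cann_lin n (om : fock n) : cann om = \sum_(B : {set 'I_n}) (om (rankOf B) 0)^* *: cannS B.
Proof.
by rewrite /cann cstar_lin adj_sumT; apply: eq_bigr => B _; rewrite adjZ.
Qed.

Lemma prod_lin n (om et : fock n) : cstar om *m cann et =
  \sum_(A : {set 'I_n}) \sum_(B : {set 'I_n}) (om (rankOf A) 0 * (et (rankOf B) 0)^*) *: cAB A B.
Proof.
rewrite cstar_lin mulmx_suml; apply: eq_bigr => A _.
rewrite cann_lin -scalemxAl mulmx_sumr scaler_sumr; apply: eq_bigr => B _.
by rewrite -scalemxAr scalerA.
Qed.

Definition deg n (x : bidx n) : nat := let: (K, P, Q) := trp x in (#|P| + #|Q| + 2 * #|K|)%N.

Lemma bcondE n k (x : bidx n) : bcond k x = ~~ odd (deg x) && (deg x <= 2 * k)%N.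
Proof.
case: x => [K|[[[K P] Q] b]] /=.
  by rewrite /deg /= !cards0 add0n oddM andFb /= leq_pmul2l.
rewrite /deg /=; set d := (#|P| + #|Q| + 2 * #|K|)%N.
apply/existsP/andP => [[l /eqP ->]|[ev le]].
  by rewrite oddM andFb leq_pmul2l // -ltnS ltn_ord.
have ed : d = (2 * d./2)%N by rewrite -{1}(odd_double_half d) (negbTE ev) add0n -mul2n.
have lk : (d./2 < k.+1)%N by rewrite ltnS -(leq_pmul2l (_ : 0 < 2)%N) // -ed.
by exists (Ordinal lk); rewrite /= -ed.
Qed.

Lemma disj_sub n (T K P : {set 'I_n}) : T \subset K -> [disjoint K & P] -> [disjoint T & P].
Proof.
rewrite subE !disjE => /forallP s /forallP d; apply/forallP => i.
by move: (s i) (d i); brute.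
Qed.

Lemma Ok_G n k (K P Q : {set 'I_n}) l : [disjoint K & P] -> [disjoint K & Q] ->
  (#|P| + #|Q| + 2 * #|K| = 2 * l)%N -> (l <= k)%N -> Ok k (G K P Q).
Proof.
move=> dKP dKQ e lk; rewrite /G /bK mulmx_suml; apply: Ok_sum => T sT.
rewrite -scalemxAl; apply: OkZ.
have dTP := disj_sub sT dKP; have dTQ := disj_sub sT dKQ.
have h := cAB_split dTP dTQ.
have -> : nS T *m cAB P Q = (wsign P T * wsign Q T) *: cAB (T :|: P) (T :|: Q).
  by rewrite h scalerA mulrACA !wsign_sq mulr1 scale1r.
apply: OkZ; apply: (Ok_cAB (l := (l - #|K| + #|T|)%N)).
  by rewrite !card_disjU //; have := subset_leq_card sT; lia.
by have := subset_leq_card sT; lia.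
Qed.

Lemma hs_l2 n (a b : algC) (M1 M2 N : op n) :
  hs (a *: M1 + b *: M2) N = a^* * hs M1 N + b^* * hs M2 N.
Proof. by rewrite -hs_conj hsDr !hsZr conjD !conjM !hs_conj. Qed.

Lemma hs_bad_cAB n (lt : rel {set 'I_n}) k (x : bidx n) (A B : {set 'I_n}) l :
  bvalid lt x -> ~~ bcond k x -> (#|A| + #|B| = 2 * l)%N -> (l <= k)%N ->
  hs (bfam x) (cAB A B) = 0.
Proof.
move=> vx nb e lk.
set T := A :&: B; set P := A :\: B; set Q := B :\: A.
have eA : A = T :|: P by rewrite /T /P; setsolve.
have eB : B = T :|: Q by rewrite /T /Q; setsolve.
have dTP : [disjoint T & P] by rewrite /T /P disjE; apply/forallP => i; rewrite !inE; brute.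
have dTQ : [disjoint T & Q] by rewrite /T /Q disjE; apply/forallP => i; rewrite !inE; brute.
have dPQ : [disjoint P & Q] by rewrite /Q /P disjE; apply/forallP => i; rewrite !inE; brute.
have cA : #|A| = (#|T| + #|P|)%N by rewrite {1}eA card_disjU.
have cB : #|B| = (#|T| + #|Q|)%N by rewrite {1}eB card_disjU.
have eN : nS T = (2%:R ^+ #|T|)^-1 *: \sum_(K : {set 'I_n} | K \subset T) (-1) ^+ #|K| *: bK K.
  by rewrite -nS_walsh scalerA mulVf ?scale1r // expf_neq0 // pnatr_eq0.
rewrite eA eB cAB_split // eN -scalemxAl mulmx_suml !hsZr hs_sumr.
rewrite [X in _ * (_ * X)]big1 ?mulr0 // => K sK.
rewrite -scalemxAl hsZr.
suff -> : hs (bfam x) (G K P Q) = 0 by rewrite mulr0.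
have hdeg : (#|P| + #|Q| + 2 * #|K| = 2 * (l - #|T| + #|K|))%N.
  by have := subset_leq_card sK; lia.
have hl : (l - #|T| + #|K| <= k)%N by have := subset_leq_card sK; lia.
have dKP := disj_sub sK dTP; have dKQ := disj_sub sK dTQ.
have bc : forall Kx Px Qx, trp x = (Kx, Px, Qx) -> Kx = K ->
    (#|Px| + #|Qx| = #|P| + #|Q|)%N -> False.
  move=> Kx Px Qx E eK eC; move/negP: nb; apply.
  rewrite bcondE /deg E eK eC hdeg oddM andFb /= leq_pmul2l //.
have dx := valid_dsj vx; have hd := bfam_dec x.
move: hd dx bc; case: (trp x) => [[Kx Px] Qx] -> /and3P [d1 d2 d3] bc.
have s3 : [disjoint Qx & Px] by rewrite disjoint_sym.
rewrite hs_l2 !hs_G //.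
case: (boolP [&& Kx == K, Px == P & Qx == Q]) => [/and3P [/eqP e1 /eqP e2 /eqP e3]|_].
  by case: (bc _ _ _ erefl e1); rewrite e2 e3.
case: (boolP [&& Kx == K, Qx == P & Px == Q]) => [/and3P [/eqP e1 /eqP e2 /eqP e3]|_].
  by case: (bc _ _ _ erefl e1); rewrite e2 e3 addnC.
by rewrite !mul0r !mulr0 addr0.
Qed.

Lemma hs_bad_Ok n (lt : rel {set 'I_n}) k (x : bidx n) (Y : op n) :
  bvalid lt x -> ~~ bcond k x -> Ok k Y -> hs (bfam x) Y = 0.
Proof.
move=> vx nb [m [c [r [s [om [et [H ->]]]]]]].
rewrite hs_sumr big1 // => i _; rewrite hsZr prod_lin hs_sumr big1 ?mulr0 // => A _.
rewrite hs_sumr big1 // => B _; rewrite hsZr.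
case: (H i) => hr hsi [l [lk e]].
case: (boolP (#|A| == r i)) => [/eqP eA|nA]; last by rewrite hr // !mul0r.
case: (boolP (#|B| == s i)) => [/eqP eB|nB]; last by rewrite (hsi B nB) rmorph0 mulr0 mul0r.
by rewrite (hs_bad_cAB vx nb (l := l)) ?mulr0 // eA eB.
Qed.

Unset Implicit Arguments.

Theorem theorem4p6 (n : nat) (lt : rel {set 'I_n})
  (lt_irr : irreflexive lt) (lt_trans : transitive lt)
  (lt_total : forall A B, A != B -> lt A B || lt B A) :
  (* every element of B^R is self-adjoint *)
  (forall x : bidx n, bvalid lt x -> adj (bfam x) = bfam x) /\
  (* B^R is orthonormal in L^2(F) *)
  (forall x y : bidx n, bvalid lt x -> bvalid lt y ->
     hs (bfam x) (bfam y) = (x == y)%:R) /\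
  (* B^R spans L^2(F) over C *)
  (forall X : op n, exists a : bidx n -> algC,
     X = \sum_(x | bvalid lt x) a x *: bfam x) /\
  (forall k : nat,
    (* B^R cap O_k^sa is exactly the explicitly described subfamily *)
    (forall x : bidx n, bvalid lt x -> (Oksa k (bfam x) <-> bcond k x)) /\
    (* and it spans O_k^sa over R *)
    (forall X : op n, Oksa k X -> exists a : bidx n -> algC,
       (forall x, a x \is Num.real) /\
       X = \sum_(x | bvalid lt x && bcond k x) a x *: bfam x)).
Proof.
split; [|split; [|split]].
- by move=> x vx; apply: (bfam_sa vx).
- by move=> x y vx vy; apply: (bfam_on lt_irr lt_trans vx vy).
- by move=> X; apply: (bfam_span lt_total X).
move=> k; split.
  move=> x vx; split.
    move=> [hO _]; apply/negPn/negP => nb.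
    have := hs_bad_Ok vx nb hO; rewrite (bfam_on lt_irr lt_trans vx vx) eqxx => /eqP.
    by rewrite oner_eq0.
  move=> bc; split; last exact: (bfam_sa vx).
  move: bc (bfam_dec x) (valid_dsj vx); rewrite bcondE /deg.
  case: (trp x) => [[K P] Q] /andP [ev le] -> /and3P [d1 d2 d3].
  set d := (#|P| + #|Q| + 2 * #|K|)%N in ev le *.
  have ed : d = (2 * d./2)%N by rewrite -{1}(odd_double_half d) (negbTE ev) add0n -mul2n.
  have lk : (d./2 <= k)%N by rewrite -(leq_pmul2l (_ : 0 < 2)%N) // -ed.
  apply: OkD; apply: OkZ; apply: (Ok_G (l := d./2)) => //.
  by rewrite -ed /d [(#|Q| + _)%N]addnC.
move=> X [hO hsa].
have [a ha] := bfam_span lt_total X.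
have coord : forall y, bvalid lt y -> hs (bfam y) X = a y.
  move=> y vy; rewrite {1}ha hs_sumr (bigD1 y) //= hsZr (bfam_on lt_irr lt_trans vy vy) eqxx mulr1.
  rewrite big1 ?addr0 // => z /andP [vz nz].
  by rewrite hsZr (bfam_on lt_irr lt_trans vy vz) eq_sym (negbTE nz) mulr0.
exists (fun x => if bvalid lt x && bcond k x then hs (bfam x) X else 0); split.
  move=> x; case: ifP => [/andP [vx _]|_]; last exact: rpred0.
  by rewrite CrealE; apply/eqP; rewrite hs_conj /hs hsa (bfam_sa vx) mxtrace_mulC.
rewrite {1}ha (bigID (fun x => bcond k x)) /= [X in _ + X]big1 ?addr0.
  by apply: eq_bigr => x /andP [vx bx]; rewrite vx bx /= coord.
by move=> x /andP [vx nb]; rewrite -coord // (hs_bad_Ok vx nb hO) scale0r.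
Qed.
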